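(* With the notation of the context, there is a surjective quandle homomorphism $\tilde R_{2n+1} \to R_{2n+1}$.
   Context: A quandle is a set $X$ with a binary operation $\triangleleft$ such that (I) $a \triangleleft a = a$; (II) for all $a,b$ there is a unique $c$ with $a = c\triangleleft b$; (III) $(a\triangleleft b)\triangleleft c = (a\triangleleft c)\triangleleft(b \triangleleft c)$; a quandle homomorphism $f$ satisfies $f(a\triangleleft b)=f(a)\triangleleft f(b)$. Fix $n\ge1$, $m=2n+1$. For a permutation $\sigma$ of $\{1,\dots,m\}$ and signs $\epsilon_i\in\{\pm1\}$, write $(\epsilon_1\sigma(1),\dots,\epsilon_m\sigma(m))$ for the $m\times m$ signed permutation matrix whose $i$-th column is $\epsilon_i e_{\sigma(i)}$, $e_j$ the standard basis column vectors. Let $a = (1, 2n+1, 2n, \ldots, n+2, -(n+1), \ldots, -3, -2)$ (column $1$ is $e_1$, column $i$ is $e_{2n+3-i}$ for $2\le i\le n+1$, column $i$ is $-e_{2n+3-i}$ for $n+2\le i\le 2n+1$) and $b = (2n+1, 1, 2, \ldots, 2n)$ (column $1$ is $e_{2n+1}$, column $i$ is $e_{i-1}$ for $i\ge2$). Let $G_{2n+1}$ be the matrix group generated by $a$ and $b$, let $H = C(a) = \{c\in G_{2n+1} : ac = ca\}$, and let $\tilde R_{2n+1}$ be the set of right cosets $Hu$ ($u\in G_{2n+1}$) with quandle operation $Hu \triangleleft Hv = H\,uv^{-1}av$. $R_{2n+1}$ is the dihedral quandle on $\{0,1,\dots,2n\}$ with $i\triangleleft j \equiv 2j - i \pmod{2n+1}$.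 *)

(* Defs.v *)
From HB Require Import structures.
From mathcomp Require Import all_boot all_order all_algebra.
Set Implicit Arguments. Unset Strict Implicit. Unset Printing Implicit Defensive.
Import GRing.Theory Num.Theory.
Local Open Scope ring_scope.

(* m = 2n+1; matrices are m x m integer matrices, indices 0-based
   (paper index i corresponds to ordinal i-1). *)
Notation mdim n := (n.*2.+1)%N.
Notation smx n := ('M[int]_(mdim n)).

(* a = (1, 2n+1, 2n, ..., n+2, -(n+1), ..., -2): column c (0-based) is
   +/- e_{(m - c) mod m}, with sign + iff c <= n. *)
Definition mat_a (n : nat) : smx n :=
  \matrix_(r < mdim n, c < mdim n)
    (if (r : nat) == ((mdim n - c) %% mdim n)%N
     then (if (c <= n)%N then 1 else -1) else 0).

(* b = (2n+1, 1, 2, ..., 2n): column c (0-based) is e_{(c + m - 1) mod m}. *)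
Definition mat_b (n : nat) : smx n :=
  \matrix_(r < mdim n, c < mdim n)
    (if (r : nat) == ((c + (mdim n).-1) %% mdim n)%N then 1 else 0).

Inductive in_G (n : nat) : smx n -> Prop :=
  | inG_a : in_G (mat_a n)
  | inG_b : in_G (mat_b n)
  | inG_1 : in_G 1%:M
  | inG_mul x y : in_G x -> in_G y -> in_G (x *m y)
  | inG_inv x : in_G x -> in_G (invmx x).
Arguments in_G : clear implicits.

Definition in_H (n : nat) (c : smx n) : Prop :=
  in_G n c /\ mat_a n *m c = c *m mat_a n.
Arguments in_H : clear implicits.

Definition rcoset (n : nat) (u : smx n) : smx n -> Prop :=
  fun x => exists h, in_H n h /\ x = h *m u.
Arguments rcoset : clear implicits.

(* Dihedral quandle R_{2n+1} on {0,...,2n}: i <| j = 2j - i mod 2n+1. *)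
Definition dih_op (n : nat) (i j : 'I_(mdim n)) : 'I_(mdim n) :=
  inZp (j.*2 + (mdim n - i))%N.

(* Main.v *)
Require Import Defs.
From mathcomp Require Import all_boot all_order all_algebra.
From Stdlib Require Import ClassicalEpsilon.
Import GRing.Theory Num.Theory.
Local Open Scope ring_scope.
Set Implicit Arguments. Unset Strict Implicit.
Section S.
Variable n : nat.
Local Notation m := (mdim n).
Local Notation I := ('I_m).
Implicit Types x y c : I.

Definition sg (s : bool) (x : I) : I := if s then - x else x.
Definition aff (s : bool) (t x : I) : I := sg s x + t.

Lemma sgK s : involutive (sg s). Proof. by case: s => x //=; rewrite /sg opprK. Qed.
Lemma sgD s x y : sg s (x + y) = sg s x + sg s y. Proof. by case: s; rewrite /sg ?opprD. Qed.
Lemma sgN s x : sg s (- x) = - sg s x. Proof. by case: s. Qed.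
Lemma sg0 s : sg s 0 = 0. Proof. by case: s; rewrite /sg ?oppr0. Qed.
Lemma sgsg s1 s2 x : sg s1 (sg s2 x) = sg (s1 (+) s2) x.
Proof. by case: s1; case: s2; rewrite /sg /= ?opprK. Qed.

Definition ainv (s : bool) (t : I) := aff s (sg s (- t)).
Lemma affK s t : cancel (aff s t) (ainv s t).
Proof. move=> x; rewrite /ainv /aff sgD sgK -addrA. by rewrite sgN addrN addr0. Qed.
Lemma affVK s t : cancel (ainv s t) (aff s t).
Proof. by move=> x; rewrite /ainv /aff sgD !sgK -addrA addNr addr0. Qed.
Lemma aff_comp s1 t1 s2 t2 x : aff s1 t1 (aff s2 t2 x) = aff (s1 (+) s2) (aff s1 t1 t2) x.
Proof. by rewrite /aff sgD sgsg addrA. Qed.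

Definition goodf (u : smx n) (g : I -> I) := forall r c, u r c ^+ 2 = (r == g c)%:R.

Lemma goodf_eq u g g' : goodf u g -> g =1 g' -> goodf u g'.
Proof. by move=> H E r c; rewrite H E. Qed.

Lemma good0 u g r c : goodf u g -> r != g c -> u r c = 0.
Proof. by move=> H /negbTE E; apply/eqP; rewrite -sqrf_eq0 H E. Qed.

Lemma goodf_mul (x y : smx n) gx gy : goodf x gx -> goodf y gy -> goodf (x *m y) (gx \o gy).
Proof.
move=> Hx Hy r c; rewrite !mxE (bigD1 (gy c)) //= big1 ?addr0.
  by rewrite exprMn Hx Hy eqxx mulr1.
by move=> k kn; rewrite (good0 Hy) ?mulr0.
Qed.

Lemma goodf_tr (x : smx n) g g' : goodf x g -> cancel g g' -> cancel g' g -> goodf x^T g'.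
Proof.
move=> H K1 K2 r c; rewrite mxE H.
suff -> : (c == g r) = (r == g' c) by [].
by apply/idP/idP => /eqP E; apply/eqP; rewrite E ?K1 ?K2.
Qed.

Lemma goodf_trmul (x : smx n) g g' : goodf x g -> cancel g g' -> cancel g' g -> x *m x^T = 1%:M.
Proof.
move=> H K1 K2; apply/matrixP => r r'; rewrite !mxE (bigD1 (g' r)) //= big1.
  rewrite mxE addr0; case: (eqVneq r r') => [<-|ne].
    by rewrite -expr2 H K2 eqxx.
  by rewrite (good0 (r := r') H) ?mulr0 // K2 eq_sym.
move=> k kn; rewrite mxE; case: (eqVneq r (g k)) => [E|ne].
  by move: kn; rewrite E K1 eqxx.
by rewrite (good0 H ne) mul0r.
Qed.

Lemma goodf_inv (x : smx n) g g' : goodf x g -> cancel g g' -> cancel g' g -> goodf (invmx x) g'.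
Proof.
move=> H K1 K2; have E := goodf_trmul H K1 K2.
have [U _] := mulmx1_unit E.
have -> : invmx x = x^T by rewrite -[x^T]mul1mx -(mulVmx U) -mulmxA E mulmx1.
exact: goodf_tr H K1 K2.
Qed.

Definition good u := exists s t, goodf u (aff s t).

Lemma good_a : goodf (mat_a n) (aff true 0).
Proof.
move=> r c; rewrite mxE /aff /sg addr0.
have E : ((r:nat) == (m - c) %% m)%N = (r == -c) by [].
rewrite E; case: (r == -c) => /=; last by rewrite expr0n.
by case: (c <= n)%N; rewrite ?sqrrN expr1n.
Qed.


Definition tb : I := Ordinal (ltnSn n.*2).

Lemma good_b : goodf (mat_b n) (aff false tb).
Proof.
move=> r c; rewrite mxE /aff /sg.
have E : ((r:nat) == (c + m.-1) %% m)%N = (r == c + tb) by [].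
by rewrite E; case: (r == c + tb); rewrite /= ?expr1n ?expr0n.
Qed.

Lemma good_1 : goodf 1%:M (aff false 0).
Proof.
move=> r c; rewrite mxE /aff /sg addr0.
by case: (r == c); rewrite /= ?expr1n ?expr0n.
Qed.

Lemma inG_good u : in_G n u -> good u.
Proof.
elim=> {u}.
- by exists true, 0; exact: good_a.
- by exists false, tb; exact: good_b.
- by exists false, 0; exact: good_1.
- move=> x y _ [s1 [t1 H1]] _ [s2 [t2 H2]].
  exists (s1 (+) s2), (aff s1 t1 t2).
  by apply: goodf_eq (goodf_mul H1 H2) _ => c /=; rewrite aff_comp.
- move=> x _ [s [t H]]; exists s, (sg s (- t)).
  exact: goodf_inv H (@affK s t) (@affVK s t).
Qed.

Lemma goodf_uniq u g g' : goodf u g -> goodf u g' -> g =1 g'.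
Proof.
move=> H H' c; have := H' (g c) c; rewrite H eqxx.
by case: eqP => // _ /eqP; rewrite oner_eq0.
Qed.

Lemma double0 (t : I) : t + t = 0 -> t = 0.
Proof.
move=> /(congr1 val) /= E; apply: val_inj => /=.
have D : (m %| 2 * t)%N by rewrite mul2n -(addnn t) /dvdn E.
move: D; rewrite Gauss_dvdr; last by rewrite coprimen2 /= odd_double.
by rewrite /dvdn modn_small ?ltn_ord // => /eqP.
Qed.

Lemma centr_t h s t : goodf h (aff s t) -> mat_a n *m h = h *m mat_a n -> t = 0.
Proof.
move=> H C.
have := goodf_uniq (goodf_mul good_a H) (eq_ind_r (fun z => goodf z _) (goodf_mul H good_a) C) 0.
rewrite /= /aff !sg0 !add0r addr0 sg0 add0r /sg => E.
by apply: double0; rewrite -{1}E addNr.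
Qed.

Definition phi (u : smx n) : I := odflt 0 [pick c | u 0 c != 0].

Lemma phiP u g c : goodf u g -> injective g -> g c = 0 -> phi u = c.
Proof.
move=> H I0 E; rewrite /phi; case: pickP => [c' Hc'|none] /=.
  apply: I0; rewrite E; apply/eqP; rewrite eq_sym.
  by apply: contraR Hc' => ne; rewrite (good0 H ne).
have := none c; rewrite -sqrf_eq0 H E eqxx /=.
by move/negbT.
Qed.

Lemma phi_aff u s t : goodf u (aff s t) -> phi u = ainv s t 0.
Proof. by move=> H; apply: phiP H (can_inj (@affK s t)) (affVK _ _ _). Qed.

End S.

Lemma zmod_id (V : zmodType) (Y t X : V) : Y + t = 0 -> - (Y + Y - X + t) = X + t.
Proof.
move/eqP; rewrite addr_eq0 => /eqP ->.
by rewrite !opprD !opprK addrAC addrK addrC.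
Qed.

Definition fq (n : nat) (P : smx n -> Prop) : 'I_(mdim n) :=
  phi (epsilon (inhabits 0) (fun u => in_G n u /\ P = rcoset n u)).

Lemma in_rcoset n u : rcoset n u u.
Proof.
exists 1%:M; split; last by rewrite mul1mx.
by split; [exact: inG_1 | rewrite mulmx1 mul1mx].
Qed.

Lemma fq_rc n u : in_G n u -> fq (rcoset n u) = phi u.
Proof.
move=> Gu; rewrite /fq.
have := epsilon_spec (inhabits (0 : smx n)) (fun u0 => in_G n u0 /\ rcoset n u = rcoset n u0) (ex_intro _ u (conj Gu erefl)).
set u' := epsilon _ _ => -[Gu' E].
have := in_rcoset u; rewrite E => -[h [[Gh C] ->]].
have [s [t Hh]] := inG_good Gh.
have [s' [t' Hu']] := inG_good Gu'.
have t0 := centr_t Hh C; subst t.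
rewrite (phi_aff Hu').
symmetry; apply: phiP (goodf_mul Hh Hu') _ _.
  exact: inj_comp (can_inj (@affK _ _ _)) (can_inj (@affK _ _ _)).
by rewrite /= affVK /aff sg0 addr0.
Qed.

Lemma dihE n (i j : 'I_(mdim n)) : dih_op i j = j + j - i.
Proof.
apply: val_inj; rewrite /dih_op /=.
by rewrite modnDm addnn.
Qed.

Lemma phi_hom n u v : in_G n u -> in_G n v ->
  phi (u *m invmx v *m mat_a n *m v) = dih_op (phi u) (phi v).
Proof.
move=> Gu Gv.
have [s1 [t1 H1]] := inG_good Gu.
have [s2 [t2 H2]] := inG_good Gv.
have Hi := goodf_inv H2 (@affK _ s2 t2) (@affVK _ s2 t2).
have Hw := goodf_mul (goodf_mul (goodf_mul H1 Hi) (@good_a n)) H2.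
rewrite (phi_aff H1) (phi_aff H2) dihE.
apply: phiP Hw _ _.
  apply: inj_comp; last exact: can_inj (@affK _ _ _).
  apply: inj_comp; last exact: can_inj (@affK _ _ _).
  apply: inj_comp; first exact: can_inj (@affK _ _ _).
  exact: can_inj (@affVK _ _ _).
rewrite /=.
set x := ainv s1 t1 0; set y := ainv s2 t2 0.
have Ey : sg s2 y + t2 = 0 by rewrite -/(aff s2 t2 y) affVK.
have -> : aff s2 t2 (y + y - x) = sg s2 y + sg s2 y - sg s2 x + t2.
  by rewrite /aff sgD sgD (sgN s2 x).
have -> : aff true 0 (sg s2 y + sg s2 y - sg s2 x + t2) = aff s2 t2 x.
  by rewrite {1}/aff /sg addr0; exact: zmod_id Ey.
by rewrite affK affVK.
Qed.

Lemma surj_aux n (hn : (1 <= n)%N) j : (j < mdim n)%N ->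
  exists u, in_G n u /\ val (phi u) = j.
Proof.
elim: j => [_|j IH lt].
  exists 1%:M; split; first exact: inG_1.
  by rewrite (phi_aff (@good_1 n)) /ainv /aff sg0 /sg oppr0 addr0.
have [u [Gu Pu]] := IH (ltnW lt).
have [s [t Hu]] := inG_good Gu.
exists (u *m mat_b n); split; first exact: inG_mul Gu (inG_b n).
rewrite (phiP (c := phi u - tb n) (goodf_mul Hu (@good_b n))).
- rewrite /= Pu.
  have -> : (n.*2.+1 - n.*2 = 1)%N by rewrite subSn // subnn.
  have h1 : (1 < n.*2.+1)%N by rewrite ltnS double_gt0.
  by rewrite (modn_small h1) addn1 modn_small.
- exact: inj_comp (can_inj (@affK _ _ _)) (can_inj (@affK _ _ _)).
- rewrite /= /aff /sg addrNK (phi_aff Hu).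
  by rewrite -/(aff s t (ainv s t 0)) affVK.
Qed.

Theorem mainTheorem5 (n : nat) (hn : (1 <= n)%N) :
  exists f : (smx n -> Prop) -> 'I_(mdim n),
    (forall u v : smx n, in_G n u -> in_G n v ->
       f (rcoset n (u *m invmx v *m mat_a n *m v))
       = dih_op (f (rcoset n u)) (f (rcoset n v)))
    /\ (forall k : 'I_(mdim n), exists u : smx n, in_G n u /\ f (rcoset n u) = k).
Proof.
exists (@fq n); split.
  move=> u v Gu Gv.
  have Gw : in_G n (u *m invmx v *m mat_a n *m v).
    by apply: inG_mul => //; apply: inG_mul; [apply: inG_mul => //; exact: inG_inv | exact: inG_a].
  by rewrite !fq_rc // phi_hom.
move=> k; have [u [Gu Pu]] := surj_aux hn (ltn_ord k).
by exists u; split => //; rewrite fq_rc //; apply: val_inj.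
Qed.
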